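(* Let $t\in\{1,\dots,T\}$, and suppose that every component of the vector $\sum_{i=0}^{t-1}\Delta_i^{t}\in\mathbb{R}^p$ is nonzero. Then \[ \frac{\left\|\theta_{t}^{BP}-\theta_{t}^{\lambda}\right\|_2}{\left\|\theta_{t}^{BP}-\theta_{0}\right\|_2}\;\longrightarrow\;0 \qquad\text{as } \alpha\to 0^+ . \]
   Context: Fix integers $d,p\ge 1$ and a horizon $T\ge 1$. A recurrent network with a differentiable transition map $f$ and fixed inputs $x_1,\dots,x_T$ produces hidden states $h_0,h_1,\dots,h_T\in\mathbb{R}^d$ via $h_t=f(x_t,h_{t-1})$ (network parameters are held fixed). For $1\le t\le T$ there is a loss $L_t=\ell_t(h_t)$ with $\ell_t$ differentiable. For $0\le s\le\tau\le T$, $\partial h_\tau/\partial h_s\in\mathbb{R}^{d\times d}$ denotes the Jacobian of $h_\tau$ viewed as a function of $h_s$ through the recursion (the identity if $\tau=s$), and for $s<\tau$, $\partial L_\tau/\partial h_s\in\mathbb{R}^d$ is the gradient of $L_\tau$ viewed as a function of $h_s$. For $v\in\mathbb{R}^d$, the notation $v^\top \partial h_\tau/\partial h_s$ denotes the vector $(\partial h_\tau/\partial h_s)^\top v\in\mathbb{R}^d$. A ''synthesiser'' is a map $g:\mathbb{R}^d\times\mathbb{R}^p\to\mathbb{R}^d$, $(h,\theta)\mapsto g(h;\theta)$, continuously differentiable in $\theta$, with $\nabla_\theta g(h;\theta)\in\mathbb{R}^{d\times p}$ its Jacobian with respect to $\theta$. Fix $\gamma,\lambda\in[0,1]$, an initial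 weight vector $\theta_0\in\mathbb{R}^p$, and a learning rate $\alpha>0$; all quantities below except the data depend on $\alpha$. Conventions: $0^0=1$. $n$-step and interim $\lambda$-weighted synthetic gradients relative to a sequence of weight vectors $(\vartheta_i)$: for $k\ge 0$, $n\ge1$, $k+n\le T$, $G_k^{(n)}=\sum_{\tau=1}^{n}\gamma^{\tau-1}\frac{\partial L_{k+\tau}}{\partial h_k}+\gamma^{n}\,g(h_{k+n};\vartheta_{k+n-1})^\top\frac{\partial h_{k+n}}{\partial h_k}$, and for $0\le k<H\le T$, $G_k^{\lambda\mid H}=(1-\lambda)\sum_{n=1}^{H-k-1}\lambda^{n-1}G_k^{(n)}+\lambda^{H-k-1}G_k^{(H-k)}$. Accumulate $\mathrm{BP}(\lambda)$: set $e_{-1}=0\in\mathbb{R}^{d\times p}$ and, starting from $\theta_0$, for $t=0,1,\dots,T-1$: $e_t=\gamma\lambda\,\frac{\partial h_t}{\partial h_{t-1}}e_{t-1}+\nabla_\theta g(h_t;\theta_t)$ (the first term is zero for $t=0$), $\delta_t=\frac{\partial L_{t+1}}{\partial h_t}+\gamma\, g(h_{t+1};\theta_t)^\top\frac{\partial h_{t+1}}{\partial h_t}-g(h_t;\theta_t)\in\mathbb{R}^d$, and $\theta_{t+1}=\theta_t+\alpha\, e_t^\top\delta_t$. Write $\theta_t^{BP}$ for the vector $\theta_t$ so produced. Online $\lambda$-SG algorithm: for each horizon $t\in\{1,\dots,T\}$ set $\theta_0^t=\theta_0$ and for $k=0,\dots,t-1$, $\theta_{k+1}^t=\theta_k^t+\alpha\,\nabla_\theta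 g(h_k;\theta_k^t)^\top\big(G_k^{\lambda\mid t}-g(h_k;\theta_k^t)\big)$, where $G_k^{\lambda\mid t}$ is computed relative to the sequence $\vartheta_i=\theta_i^i$ (with $\theta_0^0=\theta_0$). Write $\theta_t^{\lambda}:=\theta_t^t$. Finally, $\bar G_i^{\lambda\mid t}$ denotes the interim $\lambda$-weighted synthetic gradient computed relative to the constant sequence $\vartheta_j=\theta_0$, and $\Delta_i^t:=\nabla_\theta g(h_i;\theta_0)^\top\big(\bar G_i^{\lambda\mid t}-g(h_i;\theta_0)\big)\in\mathbb{R}^p$. *)

(* Defs.v *)
From HB Require Import structures.
From mathcomp Require Import all_boot all_order all_algebra.
From mathcomp Require Import all_classical all_reals all_analysis.
Set Implicit Arguments. Unset Strict Implicit. Unset Printing Implicit Defensive.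
Import Order.TTheory GRing.Theory Num.Theory.
Import numFieldNormedType.Exports.
Local Open Scope ring_scope.

(* Vectors of R^n are row vectors 'rV[R]_n.  For v : 'rV_d and a d x d
   matrix M, the paper's  v^T M  (= M^T v) is the row vector  v *m M. *)

Section Defs.
Variable R : realType.

(* Usual Jacobian (rows = output coordinates, columns = input coordinates):
   the transpose of MathComp-Analysis' [jacobian] (which is lin1_mx ('d f p)). *)
Definition Jac n m (f : 'rV[R]_n -> 'rV[R]_m) (y : 'rV[R]_n) : 'M[R]_(m, n) :=
  (jacobian f y)^T.

Definition grad n (f : 'rV[R]_n -> R) (y : 'rV[R]_n) : 'rV[R]_n :=
  \row_j ('d f y (delta_mx 0 j : 'rV[R]_n)).

Definition norm2 n (v : 'rV[R]_n) : R := Num.sqrt (\sum_(k < n) v 0 k ^+ 2).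

Variables (d p m : nat).
Variable f : 'rV[R]_m * 'rV[R]_d -> 'rV[R]_d.
Variable x : nat -> 'rV[R]_m.
Variable h0 : 'rV[R]_d.
Variable ell : nat -> 'rV[R]_d -> R.            (* loss L_t = ell t (h_t) *)
Variable g : 'rV[R]_d -> 'rV[R]_p -> 'rV[R]_d.
Variables gamma lambda : R.
Variable theta0 : 'rV[R]_p.

Definition step (t : nat) (y : 'rV[R]_d) : 'rV[R]_d := f (x t, y).

Fixpoint hs (t : nat) : 'rV[R]_d :=
  match t with 0 => h0 | t'.+1 => step t (hs t') end.

Fixpoint flow (s n : nat) : 'rV[R]_d -> 'rV[R]_d :=
  match n with 0 => id | n'.+1 => fun y => step (s + n').+1 (flow s n' y) end.

Definition dh (tau s : nat) : 'M[R]_d := Jac (flow s (tau - s)) (hs s).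

Definition dL (tau s : nat) : 'rV[R]_d :=
  grad (fun y => ell tau (flow s (tau - s) y)) (hs s).

Definition gradg (h : 'rV[R]_d) (th : 'rV[R]_p) : 'M[R]_(d, p) := Jac (g h) th.

Definition Gn (vth : nat -> 'rV[R]_p) (k n : nat) : 'rV[R]_d :=
  \sum_(1 <= tau < n.+1) (gamma ^+ (tau - 1) *: dL (k + tau) k)
  + gamma ^+ n *: (g (hs (k + n)) (vth (k + n - 1)%N) *m dh (k + n) k).

Definition Glam (vth : nat -> 'rV[R]_p) (k H : nat) : 'rV[R]_d :=
  (1 - lambda) *: \sum_(1 <= n < H - k) (lambda ^+ (n - 1) *: Gn vth k n)
  + lambda ^+ (H - k - 1) *: Gn vth k (H - k).

(* Accumulate BP(lambda): bp alpha t = (theta_t, e_{t-1}) *)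
Fixpoint bp (alpha : R) (t : nat) : 'rV[R]_p * 'M[R]_(d, p) :=
  match t with
  | 0 => (theta0, 0)
  | t'.+1 =>
      let th := (bp alpha t').1 in
      let e_prev := (bp alpha t').2 in
      let e := (if t' == 0%N then 0 else gamma * lambda *: (dh t' t'.-1 *m e_prev))
               + gradg (hs t') th in
      let delta := dL t'.+1 t' + gamma *: (g (hs t'.+1) th *m dh t'.+1 t')
                   - g (hs t') th in
      (th + alpha *: (delta *m e), e)
  end.

Definition theta_BP (alpha : R) (t : nat) : 'rV[R]_p := (bp alpha t).1.

(* inner loop of online lambda-SG for horizon H, given the diagonal
   sequence vth i = theta_i^i : returns k |-> theta_k^H *)
Fixpoint lam_inner (alpha : R) (vth : nat -> 'rV[R]_p) (H k : nat) : 'rV[R]_p :=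
  match k with
  | 0 => theta0
  | k'.+1 =>
      let th := lam_inner alpha vth H k' in
      th + alpha *: ((Glam vth k' H - g (hs k') th) *m gradg (hs k') th)
  end.

(* lam_diag alpha t i = theta_i^i for i <= t *)
Fixpoint lam_diag (alpha : R) (t : nat) : nat -> 'rV[R]_p :=
  match t with
  | 0 => fun _ => theta0
  | t'.+1 =>
      let vth := lam_diag alpha t' in
      let new := lam_inner alpha vth t'.+1 t'.+1 in
      fun i => if (i <= t')%N then vth i else new
  end.

Definition theta_lam (alpha : R) (t : nat) : 'rV[R]_p := lam_diag alpha t t.

Definition Delta (t i : nat) : 'rV[R]_p :=
  (Glam (fun _ => theta0) i t - g (hs i) theta0) *m gradg (hs i) theta0.

End Defs.

(* Main.v *)
Require Import Defs.
From HB Require Import structures.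
From mathcomp Require Import all_boot all_order all_algebra.
From mathcomp Require Import all_classical all_reals all_analysis.
From mathcomp Require Import zify.
Import Order.TTheory GRing.Theory Num.Theory.
Import numFieldNormedType.Exports.
Local Open Scope classical_set_scope.
Local Open Scope ring_scope.

Section ChainRule.
Variable R : realType.

Lemma row_lin1 n k (h : 'rV[R]_n -> 'rV[R]_k) i :
  row i (lin1_mx h) = h (delta_mx 0 i).
Proof. by apply/rowP => j; rewrite !mxE. Qed.

Lemma Jac_comp n k l (F : 'rV[R]_k -> 'rV[R]_l) (G : 'rV[R]_n -> 'rV[R]_k) y :
  differentiable G y -> differentiable F (G y) ->
  Jac (F \o G) y = Jac F (G y) *m Jac G y.
Proof.
move=> dG dF; rewrite /Jac /jacobian diff_comp // -trmx_mul; congr (_^T).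
apply/row_matrixP => i; rewrite row_lin1 rowE mulmxA -rowE row_lin1.
by rewrite mul_rV_lin1.
Qed.

Lemma Jac_id n (y : 'rV[R]_n) : Jac id y = 1%:M.
Proof.
rewrite /Jac /jacobian diff_val.
rewrite -[RHS]trmx1; congr (_^T).
by apply/row_matrixP => i; rewrite row_lin1 rowE mulmx1.
Qed.

Lemma grad_comp n k (F : 'rV[R]_k -> R) (G : 'rV[R]_n -> 'rV[R]_k) y :
  differentiable G y -> differentiable F (G y) ->
  grad (F \o G) y = grad F (G y) *m Jac G y.
Proof.
move=> dG dF; apply/rowP => j; rewrite /grad /Jac /jacobian !mxE diff_comp //=.
set w := 'd G y _.
rewrite {1}(row_sum_delta w) linear_sum; apply: eq_bigr => i _.
by rewrite linearZ !mxE /= mulrC.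
Qed.

End ChainRule.

Section Abs.
Variables (R : realType) (d p T : nat) (gamma lambda : R) (theta0 : 'rV[R]_p).
Variable DH : nat -> nat -> 'M[R]_d.
Variable DL : nat -> nat -> 'rV[R]_d.
Variable G : nat -> 'rV[R]_p -> 'rV[R]_d.
Variable GG : nat -> 'rV[R]_p -> 'M[R]_(d, p).
Hypothesis DH_refl : forall k, DH k k = 1%:M.
Hypothesis DH_trans : forall k n, DH (k + n).+1 k = DH (k + n).+1 (k + n) *m DH (k + n) k.
Hypothesis DL_trans : forall k n, ((k + n).+1 <= T)%N ->
  DL (k + n).+1 k = DL (k + n).+1 (k + n) *m DH (k + n) k.

Definition GnA (vth : nat -> 'rV[R]_p) (k n : nat) : 'rV[R]_d :=
  \sum_(1 <= tau < n.+1) (gamma ^+ (tau - 1) *: DL (k + tau) k)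
  + gamma ^+ n *: (G (k + n) (vth (k + n - 1)%N) *m DH (k + n) k).

Definition GlamA (vth : nat -> 'rV[R]_p) (k H : nat) : 'rV[R]_d :=
  (1 - lambda) *: \sum_(1 <= n < H - k) (lambda ^+ (n - 1) *: GnA vth k n)
  + lambda ^+ (H - k - 1) *: GnA vth k (H - k).

Definition DeltaA (t i : nat) : 'rV[R]_p :=
  (GlamA (fun _ => theta0) i t - G i theta0) *m GG i theta0.

Local Notation cst := (fun _ : nat => theta0).

Definition Dk j : 'rV[R]_d := DL j.+1 j + gamma *: (G j.+1 theta0 *m DH j.+1 j)
  - G j theta0.

Lemma Gn0 k : GnA cst k 0 = G k theta0.
Proof. by rewrite /GnA big_geq // addn0 DH_refl mulmx1 expr0 scale1r add0r. Qed.

Lemma Gn_diff k n : ((k+n).+1 <= T)%N ->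
  GnA cst k n.+1 - GnA cst k n = gamma ^+ n *: (Dk (k+n) *m DH (k+n) k).
Proof.
move=> hT; rewrite /GnA big_nat_recr //= subn1 /= addnS.
rewrite (@DL_trans k n hT) DH_trans /Dk.
rewrite !mulmxDl mulNmx -scalemxAl -mulmxA exprSr -scalerA.
rewrite !scalerDr scalerN.
set S := \sum_(_ <= _ < _) _.
by rewrite -(addrA S) (addrC S) addrKA.
Qed.

Lemma lam_avg (V : lmodType R) (Y : nat -> V) N : (0 < N)%N ->
  (1 - lambda) *: \sum_(1 <= n < N) (lambda ^+ (n - 1) *: Y n)
    + lambda ^+ (N - 1) *: Y N
  = Y 0%N + \sum_(0 <= j < N) lambda ^+ j *: (Y j.+1 - Y j).
Proof.
case: N => // n _; elim: n => [|n IH].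
  by rewrite big_geq // scaler0 add0r expr0 scale1r big_nat1 expr0 scale1r addrC subrK.
rewrite big_nat_recr //= [in RHS]big_nat_recr //= addrA -IH !subn1 /=.
rewrite scalerDr scalerA mulrBl mul1r scalerBl -exprS scalerBr.
rewrite scalerBl; set A := (1 *: _ - _).
by rewrite -!addrA [- (_ *: Y n.+1) + _]addrC.
Qed.

Lemma Glam_id k H : (k < H)%N -> (H <= T)%N ->
  GlamA cst k H - G k theta0 =
  \sum_(0 <= j < H - k) (gamma * lambda) ^+ j *: (Dk (k + j) *m DH (k + j) k).
Proof.
move=> kH HT; rewrite /GlamA (@lam_avg _ (fun n => GnA cst k n)) ?subn_gt0 //.
rewrite Gn0 addrAC subrr add0r.
apply: eq_big_nat => j /andP[_ jH].
rewrite Gn_diff; last by lia.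
by rewrite scalerA exprMn mulrC.
Qed.

Lemma tri_sum (V : zmodType) (w : nat -> nat -> V) t :
  \sum_(i < t) \sum_(0 <= j < t - i) w (i : nat) (i + j)%N
  = \sum_(k < t) \sum_(i < k.+1) w (i : nat) (k : nat).
Proof.
elim: t => [|t IH]; first by rewrite !big_ord0.
rewrite big_ord_recr /= [in RHS]big_ord_recr /= -IH subSnn big_nat1 addn0.
rewrite (eq_bigr (fun i : 'I_t => \sum_(0 <= j < t - i) w (i : nat) (i + j)%N + w (i : nat) t)); last first.
  move=> i _; rewrite subSn ?(ltnW (ltn_ord i)) // big_nat_recr //= subnKC //.
  exact: ltnW.
rewrite big_split /= [in RHS]big_ord_recr /=.
by rewrite addrA.
Qed.

Fixpoint Ek k : 'M[R]_(d,p) := match k with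
  | 0 => GG 0 theta0
  | k'.+1 => (gamma * lambda) *: (DH k'.+1 k' *m Ek k') + GG k'.+1 theta0
  end.

Lemma Ek_sum k : Ek k = \sum_(i < k.+1) (gamma * lambda) ^+ (k - i) *: (DH k i *m GG i theta0).
Proof.
elim: k => [|k IH].
  by rewrite big_ord1 /= sub0n expr0 scale1r DH_refl mul1mx.
rewrite /= IH [in RHS]big_ord_recr /= subnn expr0 scale1r DH_refl mul1mx.
congr (_ + _); rewrite mulmx_sumr scaler_sumr; apply: eq_bigr => i _.
have ik : (i <= k)%N by rewrite -ltnS.
rewrite -scalemxAr scalerA -exprS (subSn ik).
congr (_ *: _); rewrite mulmxA; congr (_ *m _).
by have := DH_trans i (k - i); rewrite (subnKC ik) => ->.
Qed.

Lemma main_idA t : (t <= T)%N ->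
  \sum_(k < t) Dk k *m Ek k = \sum_(i < t) DeltaA t i.
Proof.
move=> tT.
pose w (i k : nat) := (gamma * lambda) ^+ (k - i) *: (Dk k *m DH k i *m GG i theta0).
transitivity (\sum_(k < t) \sum_(i < k.+1) w (i : nat) (k : nat)).
  apply: eq_bigr => k _; rewrite Ek_sum mulmx_sumr; apply: eq_bigr => i _.
  by rewrite /w -scalemxAr mulmxA.
rewrite -tri_sum; apply: eq_bigr => i _.
rewrite /DeltaA Glam_id //.
rewrite mulmx_suml; apply: eq_bigr => j _.
by rewrite /w addKn -scalemxAl.
Qed.

End Abs.

Section Cvg.
Variables (R : realType) (T : Type) (F : set_system T).
Context {FF : Filter F}.

Lemma cvgD' (V : normedModType R) (f g : T -> V) a b :
  f @ F --> a -> g @ F --> b -> (fun t => f t + g t) @ F --> a + b.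
Proof. exact: cvgD. Qed.

Lemma cvgB' (V : normedModType R) (f g : T -> V) a b :
  f @ F --> a -> g @ F --> b -> (fun t => f t - g t) @ F --> a - b.
Proof. exact: cvgB. Qed.

Lemma cvg_sumr (V : normedModType R) (I : Type) (r : seq I) (P : pred I)
  (Ff : I -> T -> V) (L : I -> V) :
  (forall i, Ff i @ F --> L i) ->
  (fun t => \sum_(i <- r | P i) Ff i t) @ F --> \sum_(i <- r | P i) L i.
Proof.
move=> H; elim: r => [|i r IH].
  under eq_cvg do rewrite big_nil.
  rewrite big_nil; exact: cvg_cst.
under eq_cvg do rewrite big_cons.
rewrite big_cons; case: (P i) => //.
exact: cvgD'.
Qed.

Lemma cvg_entry a b (M : T -> 'M[R]_(a,b)) (L : 'M[R]_(a,b)) :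
  M @ F --> L -> forall i j, (fun t => M t i j) @ F --> L i j.
Proof.
move=> ML i j.
exact: (continuous_cvg _ (differentiable_continuous (differentiable_coord L i j)) ML).
Qed.

Lemma cvg_entries a b (M : T -> 'M[R]_(a,b)) (L : 'M[R]_(a,b)) :
  (forall i j, (fun t => M t i j) @ F --> L i j) -> M @ F --> L.
Proof.
move=> H; apply/cvgrPdist_le => /= e e0.
near=> t.
rewrite [leLHS]/Num.Def.normr/= mx_normrE (bigmax_le _ (ltW e0))//= => i _.
rewrite !mxE/=.
move: i; near: t; apply: filter_forall => /= i.
exact: ((cvgrPdist_le _ _).1 (H i.1 i.2)).
Unshelve. all: by end_near. Qed.

Lemma cvg_mulmx a b c (A : T -> 'M[R]_(a,b)) (B : T -> 'M[R]_(b,c)) (A0 : 'M[R]_(a,b)) (B0 : 'M[R]_(b,c)) :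
  A @ F --> A0 -> B @ F --> B0 -> (fun t => A t *m B t) @ F --> A0 *m B0.
Proof.
move=> HA HB; apply: cvg_entries => i j.
under eq_cvg do rewrite mxE.
rewrite mxE; apply: cvg_sumr => k.
by apply: cvgM; apply: cvg_entry.
Qed.

End Cvg.

Arguments cvgD' {R T F FF V f g a b}.
Arguments cvgB' {R T F FF V f g a b}.
Arguments cvg_sumr {R T F FF V I r P Ff L}.
Arguments cvg_mulmx {R T F FF a b c A B A0 B0}.
Arguments cvg_entry {R T F FF a b M L}.

Section Norm2.
Variable R : realType.

Lemma norm2Z n (a : R) (w : 'rV[R]_n) : norm2 (a *: w) = `|a| * norm2 w.
Proof.
rewrite /norm2; under eq_bigr do rewrite mxE exprMn.
by rewrite -mulr_sumr sqrtrM ?sqr_ge0 // sqrtr_sqr.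
Qed.

Lemma norm2_0 n : norm2 (0 : 'rV[R]_n) = 0.
Proof.
rewrite /norm2; under eq_bigr do rewrite mxE expr2 mulr0.
by rewrite big1 // sqrtr0.
Qed.

Lemma norm2_gt0 n (w : 'rV[R]_n) k : w 0 k != 0 -> 0 < norm2 w.
Proof.
move=> hk; rewrite /norm2 sqrtr_gt0 (bigD1 k) //=.
apply: ltr_wpDr; first by apply: sumr_ge0 => i _; exact: sqr_ge0.
by rewrite lt0r sqr_ge0 andbT expf_neq0.
Qed.

Lemma norm2_cvg (T' : Type) (F' : set_system T') {FF' : Filter F'} n
  (w : T' -> 'rV[R]_n) (w0 : 'rV[R]_n) :
  w @ F' --> w0 -> (fun t => norm2 (w t)) @ F' --> norm2 w0.
Proof.
move=> H; rewrite /norm2.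
apply: (continuous_cvg _ (@sqrt_continuous R _)).
apply: cvg_sumr => k.
under eq_cvg do rewrite expr2.
rewrite expr2; apply: cvgM; exact: cvg_entry.
Qed.

End Norm2.
Arguments norm2_cvg {R T' F' FF' n w w0}.

Section RNN.
Variables (R : realType) (d p m T : nat).
Variable f : 'rV[R]_m * 'rV[R]_d -> 'rV[R]_d.
Variable x : nat -> 'rV[R]_m.
Variable h0 : 'rV[R]_d.
Variable ell : nat -> 'rV[R]_d -> R.
Variable g : 'rV[R]_d -> 'rV[R]_p -> 'rV[R]_d.
Variables gamma lambda : R.
Variable theta0 : 'rV[R]_p.
Hypothesis df : forall z, differentiable f z.
Hypothesis dell : forall tau, (1 <= tau <= T)%N -> forall y, differentiable (ell tau) y.
Hypothesis dg : forall h th, differentiable (g h) th.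
Hypothesis cgg : forall h, continuous (fun th => gradg g h th).

Local Notation hs := (hs f x h0).
Local Notation flow := (flow f x).
Local Notation dh := (dh f x h0).
Local Notation dL := (dL f x h0 ell).
Local Notation step := (step f x).

Lemma diff_step t y : differentiable (step t) y.
Proof.
rewrite /step; apply: (@differentiable_comp _ _ _ _ (fun y => (x t, y)) f) => //.
Qed.

Lemma diff_flow s n y : differentiable (flow s n) y.
Proof.
elim: n y => [|n IH] y /=; first by [].
by apply: (@differentiable_comp _ _ _ _ (flow s n) (step (s + n).+1)) => //; apply: diff_step.
Qed.

Lemma flow_hs s n : flow s n (hs s) = hs (s + n).
Proof.
elim: n => [|n IH] /=; rewrite ?addn0 //.
by rewrite IH addnS.
Qed.

Lemma flowS s n : flow s n.+1 = flow (s + n) 1 \o flow s n.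
Proof. by apply: funext => y /=; rewrite addn0. Qed.

Lemma dh_refl k : dh k k = 1%:M.
Proof. by rewrite /Defs.dh subnn; apply: Jac_id. Qed.

Lemma dh_trans k n : dh (k + n).+1 k = dh (k+n).+1 (k+n) *m dh (k+n) k.
Proof.
rewrite /Defs.dh.
have -> : ((k + n).+1 - k = n.+1)%N by rewrite -addnS addKn.
rewrite subSnn addKn flowS Jac_comp ?flow_hs //; exact: diff_flow.
Qed.

Lemma dL_trans k n : ((k+n).+1 <= T)%N ->
  dL (k + n).+1 k = dL (k + n).+1 (k+n) *m dh (k+n) k.
Proof.
move=> hT; rewrite /Defs.dL /Defs.dh.
have -> : ((k + n).+1 - k = n.+1)%N by rewrite -addnS addKn.
rewrite subSnn addKn flowS.
have -> : (fun y => ell (k + n).+1 ((flow (k + n) 1 \o flow k n) y)) =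
  (fun z => ell (k + n).+1 (flow (k + n) 1 z)) \o flow k n by [].
rewrite grad_comp ?flow_hs //; first exact: diff_flow.
apply: (@differentiable_comp _ _ _ _ (flow (k+n) 1) (ell (k+n).+1)).
  exact: diff_flow.
by apply: dell; rewrite hT.
Qed.

Local Notation cst := (fun _ : nat => theta0).
Local Notation Gc := (fun j => g (hs j)).
Local Notation GGc := (fun j => gradg g (hs j)).
Local Notation DkC := (Dk R d p gamma theta0 dh dL Gc).
Local Notation EkC := (Ek R d p gamma lambda theta0 dh GGc).
Local Notation Delta := (Delta f x h0 ell g gamma lambda theta0).

Lemma main_id t : (t <= T)%N ->
  \sum_(k < t) DkC k *m EkC k = \sum_(i < t) Delta t i.
Proof.
move=> tT.
rewrite (@main_idA R d p T gamma lambda theta0 dh dL Gc GGc dh_refl dh_trans dL_trans t tT).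
by apply: eq_bigr => i _.
Qed.


Local Notation F := ((0 : R)^'+).
Local Notation bp := (bp f x h0 ell g gamma lambda theta0).

Definition thB a k := (bp a k).1.
Definition eB a k := (bp a k.+1).2.
Definition delB a k := dL k.+1 k + gamma *: (g (hs k.+1) (thB a k) *m dh k.+1 k)
  - g (hs k) (thB a k).

Lemma thBS a k : thB a k.+1 = thB a k + a *: (delB a k *m eB a k).
Proof. by []. Qed.
Lemma eB0 a : eB a 0 = 0 + gradg g (hs 0) theta0.
Proof. by []. Qed.
Lemma eBS a k : eB a k.+1 =
  (gamma * lambda) *: (dh k.+1 k *m eB a k) + gradg g (hs k.+1) (thB a k.+1).
Proof. by []. Qed.

Lemma alpha0 : (fun a : R => a) @ F --> (0:R).
Proof. apply: cvg_at_right_filter; exact: cvg_id. Qed.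

Lemma g_cvg (th : R -> 'rV[R]_p) j :
  th a @[a --> F] --> theta0 -> g (hs j) (th a) @[a --> F] --> g (hs j) theta0.
Proof. by move=> H; exact: (continuous_cvg _ (differentiable_continuous (dg _ _)) H). Qed.

Lemma gg_cvg (th : R -> 'rV[R]_p) j :
  th a @[a --> F] --> theta0 ->
  gradg g (hs j) (th a) @[a --> F] --> gradg g (hs j) theta0.
Proof. by move=> H; exact: (continuous_cvg _ (cgg _ _) H). Qed.

Lemma EkCS k : EkC k.+1 = (gamma * lambda) *: (dh k.+1 k *m EkC k) + gradg g (hs k.+1) theta0.
Proof. by []. Qed.

Lemma cvg_bp k : thB a k @[a --> F] --> theta0 /\ eB a k @[a --> F] --> EkC k.
Proof.
elim: k => [|k [IH1 IH2]].
  split; first exact: cvg_cst.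
  have -> : (fun a => eB a 0) = (fun _ => EkC 0).
    by apply: funext => a; rewrite eB0 add0r.
  exact: cvg_cst.
have Hdel : delB a k @[a --> F] --> DkC k.
  apply: cvgB'; last exact: g_cvg.
  apply: cvgD'; first exact: cvg_cst.
  apply: cvgZ; first exact: cvg_cst.
  by apply: cvg_mulmx; [exact: g_cvg | exact: cvg_cst].
have H1 : thB a k.+1 @[a --> F] --> theta0.
  rewrite -[theta0]addr0 -(scale0r (DkC k *m EkC k)).
  under eq_cvg do rewrite thBS.
  exact: cvgD' IH1 (cvgZ alpha0 (cvg_mulmx Hdel IH2)).
split => //.
under eq_cvg do rewrite eBS.
rewrite EkCS.
apply: cvgD'; last exact: gg_cvg.
apply: cvgZ; first exact: cvg_cst.
by apply: cvg_mulmx; first exact: cvg_cst.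
Qed.

Lemma thB_sum a k : thB a k = theta0 + a *: \sum_(j < k) (delB a j *m eB a j).
Proof.
elim: k => [|k IH]; first by rewrite big_ord0 scaler0 addr0.
by rewrite thBS IH big_ord_recr /= scalerDr addrA.
Qed.

Local Notation Gn := (Gn f x h0 ell g gamma).
Local Notation Glam := (Glam f x h0 ell g gamma lambda).
Local Notation lam_inner := (lam_inner f x h0 ell g gamma lambda theta0).
Local Notation lam_diag := (lam_diag f x h0 ell g gamma lambda theta0).

Lemma Gn_cvg (vth : R -> nat -> 'rV[R]_p) k n :
  (forall i, vth a i @[a --> F] --> theta0) ->
  Gn (vth a) k n @[a --> F] --> Gn cst k n.
Proof.
move=> H; rewrite /Defs.Gn.
apply: cvgD'; first exact: cvg_cst.
apply: cvgZ; first exact: cvg_cst.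
apply: cvg_mulmx; last exact: cvg_cst.
exact: g_cvg.
Qed.

Lemma Glam_cvg (vth : R -> nat -> 'rV[R]_p) k H :
  (forall i, vth a i @[a --> F] --> theta0) ->
  Glam (vth a) k H @[a --> F] --> Glam cst k H.
Proof.
move=> Hv; rewrite /Defs.Glam.
apply: cvgD'; apply: cvgZ; try exact: cvg_cst; last exact: Gn_cvg.
apply: cvg_sumr => n; apply: cvgZ; first exact: cvg_cst.
exact: Gn_cvg.
Qed.

Definition termL a vth H j :=
  (Glam vth j H - g (hs j) (lam_inner a vth H j)) *m gradg g (hs j) (lam_inner a vth H j).

Lemma lam_innerS a vth H k :
  lam_inner a vth H k.+1 = lam_inner a vth H k + a *: termL a vth H k.
Proof. by []. Qed.

Lemma termL_cvg (vth : R -> nat -> 'rV[R]_p) H j :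
  (forall i, vth a i @[a --> F] --> theta0) ->
  lam_inner a (vth a) H j @[a --> F] --> theta0 ->
  termL a (vth a) H j @[a --> F] --> Delta H j.
Proof.
move=> Hv Hl.
apply: cvg_mulmx; last exact: gg_cvg.
by apply: cvgB'; [exact: Glam_cvg | exact: g_cvg].
Qed.

Lemma inner_cvg (vth : R -> nat -> 'rV[R]_p) H :
  (forall i, vth a i @[a --> F] --> theta0) ->
  forall k, lam_inner a (vth a) H k @[a --> F] --> theta0 /\
    termL a (vth a) H k @[a --> F] --> Delta H k.
Proof.
move=> Hv; elim => [|k [IH1 IH2]].
  have H0 : lam_inner a (vth a) H 0 @[a --> F] --> theta0 by exact: cvg_cst.
  split; first exact: H0.
  exact: (@termL_cvg vth H 0 Hv H0).
have H1 : lam_inner a (vth a) H k.+1 @[a --> F] --> theta0.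
  have -> : (fun a => lam_inner a (vth a) H k.+1) =
    (fun a => lam_inner a (vth a) H k + a *: termL a (vth a) H k).
    by apply: funext => a; exact: lam_innerS.
  have := cvgD' IH1 (cvgZ alpha0 IH2).
  by rewrite scale0r addr0 => HH; exact: HH.
split; first exact: H1.
exact: (@termL_cvg vth H k.+1 Hv H1).
Qed.

Lemma lam_diagS a t i : lam_diag a t.+1 i =
  if (i <= t)%N then lam_diag a t i else lam_inner a (lam_diag a t) t.+1 t.+1.
Proof. by []. Qed.

Lemma diag_cvg t i : lam_diag a t i @[a --> F] --> theta0.
Proof.
elim: t i => [|t IH] i; first exact: cvg_cst.
have -> : (fun a => lam_diag a t.+1 i) =
  (fun a => if (i <= t)%N then lam_diag a t i else lam_inner a (lam_diag a t) t.+1 t.+1).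
  by apply: funext => a; exact: lam_diagS.
case: (i <= t)%N; first exact: IH.
by have [] := @inner_cvg (fun a => lam_diag a t) t.+1 IH t.+1.
Qed.

Lemma inner_sum a vth H k :
  lam_inner a vth H k = theta0 + a *: \sum_(j < k) termL a vth H j.
Proof.
elim: k => [|k IH]; first by rewrite big_ord0 scaler0 addr0.
by rewrite lam_innerS IH big_ord_recr /= scalerDr addrA.
Qed.

Lemma delB_cvg k : thB a k @[a --> F] --> theta0 -> delB a k @[a --> F] --> DkC k.
Proof.
move=> IH1.
apply: cvgB'; last exact: g_cvg.
apply: cvgD'; first exact: cvg_cst.
apply: cvgZ; first exact: cvg_cst.
by apply: cvg_mulmx; [exact: g_cvg | exact: cvg_cst].
Qed.

Lemma subDD (u v w : 'rV[R]_p) : (u + w) - (u + v) = w - v.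
Proof. by rewrite opprD addrACA subrr add0r. Qed.

Lemma subDl (u w : 'rV[R]_p) : (u + w) - u = w.
Proof. by rewrite addrAC subrr add0r. Qed.

Lemma final t : (0 < p)%N -> (1 <= t <= T)%N ->
  (forall k : 'I_p, (\sum_(i < t) Delta t i) 0 k != 0) ->
  (fun alpha : R =>
     norm2 (theta_BP f x h0 ell g gamma lambda theta0 alpha t
            - theta_lam f x h0 ell g gamma lambda theta0 alpha t)
     / norm2 (theta_BP f x h0 ell g gamma lambda theta0 alpha t - theta0))
    @ 0^'+ --> 0.
Proof.
move=> p0; case: t => // t' /andP[_ tT] Hnz.
pose U a := \sum_(j < t'.+1) (delB a j *m eB a j).
pose V a := \sum_(j < t'.+1) termL a (lam_diag a t') t'.+1 j.
have eBP a : theta_BP f x h0 ell g gamma lambda theta0 a t'.+1 = theta0 + a *: U a.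
  have := thB_sum a t'.+1; rewrite /thB /theta_BP => ->.
  by [].
have eLam a : theta_lam f x h0 ell g gamma lambda theta0 a t'.+1 = theta0 + a *: V a.
  rewrite /theta_lam lam_diagS.
  have -> : (t'.+1 <= t')%N = false by rewrite ltnn.
  by rewrite inner_sum.
have HU : U a @[a --> F] --> \sum_(j < t'.+1) (DkC j *m EkC j).
  apply: cvg_sumr => j; apply: cvg_mulmx.
    by apply: delB_cvg; exact: (cvg_bp j).1.
  exact: (cvg_bp j).2.
have HV : V a @[a --> F] --> \sum_(j < t'.+1) Delta t'.+1 j.
  apply: cvg_sumr => j.
  exact: (@inner_cvg (fun a => lam_diag a t') t'.+1 (diag_cvg t') j).2.
rewrite (@main_id t'.+1 tT) in HU.
set S := \sum_(j < t'.+1) Delta t'.+1 j.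
have HS : 0 < norm2 S by apply: (@norm2_gt0 _ _ _ (Ordinal p0)); exact: Hnz.
have Hlim : (fun a => norm2 (U a - V a) / norm2 (U a)) @ F --> 0.
  have := cvgM (norm2_cvg (cvgB' HU HV)) (cvgV (lt0r_neq0 HS) (norm2_cvg HU)).
  by rewrite subrr norm2_0 mul0r => HH; exact: HH.
apply: (cvg_trans _ Hlim).
apply: near_eq_cvg.
near=> a.
have a0 : 0 < a by near: a; exact: nbhs_right_gt.
rewrite eBP eLam subDD subDl -scalerBr !norm2Z gtr0_norm //.
by rewrite invfM mulrACA divff ?mul1r // gt_eqF.
Unshelve. all: by end_near.
Qed.
End RNN.


Theorem theorem1 (R : realType) (d p m T : nat)
  (f : 'rV[R]_m * 'rV[R]_d -> 'rV[R]_d) (x : nat -> 'rV[R]_m) (h0 : 'rV[R]_d)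
  (ell : nat -> 'rV[R]_d -> R) (g : 'rV[R]_d -> 'rV[R]_p -> 'rV[R]_d)
  (gamma lambda : R) (theta0 : 'rV[R]_p) (t : nat) :
  (0 < d)%N -> (0 < p)%N -> (1 <= T)%N ->
  (forall z, differentiable f z) ->
  (forall tau, (1 <= tau <= T)%N -> forall y, differentiable (ell tau) y) ->
  (forall h th, differentiable (g h) th) ->
  (forall h, continuous (fun th => gradg g h th)) ->
  0 <= gamma <= 1 -> 0 <= lambda <= 1 ->
  (1 <= t <= T)%N ->
  (forall k : 'I_p,
     (\sum_(i < t) Delta f x h0 ell g gamma lambda theta0 t i) 0 k != 0) ->
  (fun alpha : R =>
     norm2 (theta_BP f x h0 ell g gamma lambda theta0 alpha t
            - theta_lam f x h0 ell g gamma lambda theta0 alpha t)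
     / norm2 (theta_BP f x h0 ell g gamma lambda theta0 alpha t - theta0))
    @ 0^'+ --> 0.
Proof.
move=> d0 p0 T1 df dell dg cgg hg hl ht Hnz.
exact: (@final R d p m T f x h0 ell g gamma lambda theta0 df dell dg cgg t p0 ht Hnz).
Qed.
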